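(* Consider the heterogeneous agents $$\dot x_i=\sum_{j=1}^N\alpha_{ij}(t)(y_j-y_i),\qquad y_i=\mathrm{sat}_i(x_i),\qquad i\in\mathcal V=\{1,\dots,N\},$$ with saturation levels ordered $s_1>s_2>\dots>s_N>0$, where the time-varying undirected graph satisfies the standing assumptions, is integrally connected over $[0,\infty)$, and satisfies $\alpha_{ij}(t)\in\{0\}\cup[\alpha_{\min},\alpha_{\max}]$ for all $i,j,t$ with constants $0<\alpha_{\min}\le\alpha_{\max}$. Then for every initial condition $x(t_0)\in\mathbb R^N$ there exists $T\ge t_0$ such that $x_i(t)\in(-s_i,s_i)$ for all $i\in\{1,\dots,N-1\}$ and all $t\ge T$. Moreover, $\limsup_{t\to\infty}|x_i(t)|\le s_N$ for all $i\in\{1,\dots,N-1\}$.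
   Context: $\mathrm{sat}_i(x)=\mathrm{sign}(x)\min\{|x|,s_i\}$. Standing assumptions: $\alpha_{ij}(t)=\alpha_{ji}(t)\ge0$, each $\alpha_{ij}$ continuous on $[0,\infty)$ except on a set of measure zero; Carathéodory solutions. Integral graph: adjacency $\bar\alpha_{ij}=1$ if $\int_0^\infty\alpha_{ij}(t)dt=\infty$, else $0$; integrally connected means the integral graph is connected. *)

(* Defs.v *)
From Stdlib Require Import Reals Lra List.
Open Scope R_scope.

Definition sign (x : R) : R :=
  if Rlt_dec 0 x then 1 else if Rlt_dec x 0 then -1 else 0.

Definition sat (s x : R) : R := sign x * Rmin (Rabs x) s.

Definition null_set (E : R -> Prop) : Prop :=
  forall eps : R, 0 < eps ->
    exists a b : nat -> R,
      (forall n, a n <= b n) /\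
      (forall t, E t -> exists n, a n < t < b n) /\
      (forall n, sum_f_R0 (fun k => b k - a k) n <= eps).

Definition integral_ge (f : R -> R) (a b M : R) : Prop :=
  exists pr : Riemann_integrable f a b, M <= RiemannInt pr.

Definition integral_infinite (f : R -> R) : Prop :=
  forall M : R, exists T : R, 0 <= T /\ integral_ge f 0 T M.

(* integral graph on vertices 0..N-1 (agents 1..N shifted by one) *)
Definition integral_edge (alpha : nat -> nat -> R -> R) (i j : nat) : Prop :=
  integral_infinite (alpha i j).

Inductive reach (N : nat) (E : nat -> nat -> Prop) : nat -> nat -> Prop :=
| reach_refl : forall i, (i < N)%nat -> reach N E i i
| reach_step : forall i j k, reach N E i j -> (k < N)%nat -> E j k ->
    reach N E i k.

Definition integrally_connected (N : nat) (alpha : nat -> nat -> R -> R) : Prop :=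
  forall i j, (i < N)%nat -> (j < N)%nat -> reach N (integral_edge alpha) i j.

Definition rhs (N : nat) (alpha : nat -> nat -> R -> R) (s : nat -> R)
  (x : nat -> R -> R) (i : nat) (t : R) : R :=
  fold_right Rplus 0
    (map (fun j => alpha i j t * (sat (s j) (x j t) - sat (s i) (x i t)))
         (seq 0 N)).

(* Caratheodory solution on [t0, infinity): integral equation. *)
Definition is_solution (N : nat) (alpha : nat -> nat -> R -> R) (s : nat -> R)
  (x : nat -> R -> R) (t0 : R) : Prop :=
  forall i, (i < N)%nat -> forall t, t0 <= t ->
    exists pr : Riemann_integrable (rhs N alpha s x i) t0 t,
      x i t = x i t0 + RiemannInt pr.

(* Main.v *)
Require Import Defs.
From Stdlib Require Import Reals Lra Lia List Classical ZArith.
From Coquelicot Require Import Coquelicot.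
Open Scope R_scope.

Definition sumL (f : nat -> R) (l : list nat) : R :=
  fold_right (fun j acc => f j + acc) 0 l.

Lemma sumL_nil f : sumL f nil = 0. Proof. reflexivity. Qed.
Lemma sumL_cons f a l : sumL f (a :: l) = f a + sumL f l. Proof. reflexivity. Qed.

Lemma sumL_ext (f g : nat -> R) l : (forall i, In i l -> f i = g i) -> sumL f l = sumL g l.
Proof.
  induction l as [|a l IH]; intros H; simpl; auto.
  rewrite H by (left; auto). rewrite IH; auto. intros; apply H; right; auto.
Qed.

Lemma sumL_le (f g : nat -> R) l : (forall i, In i l -> f i <= g i) -> sumL f l <= sumL g l.
Proof.
  induction l as [|a l IH]; intros H; simpl; [lra|].
  assert (f a <= g a) by (apply H; left; auto).
  assert (sumL f l <= sumL g l) by (apply IH; intros; apply H; right; auto). lra.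
Qed.

Lemma sumL_plus f g l : sumL (fun i => f i + g i) l = sumL f l + sumL g l.
Proof. induction l; simpl; lra. Qed.

Lemma sumL_opp f l : sumL (fun i => - f i) l = - sumL f l.
Proof. induction l; simpl; lra. Qed.

Lemma sumL_minus f g l : sumL (fun i => f i - g i) l = sumL f l - sumL g l.
Proof. induction l; simpl; lra. Qed.

Lemma sumL_scal c f l : sumL (fun i => c * f i) l = c * sumL f l.
Proof. induction l; simpl; lra. Qed.

Lemma sumL_zero l : sumL (fun _ => 0) l = 0.
Proof. induction l; simpl; lra. Qed.

Lemma sumL_const_le (f : nat -> R) c n : 0 <= c -> (forall i, (i < n)%nat -> f i <= c) ->
  sumL f (seq 0 n) <= INR n * c.
Proof.
  intros Hc H.
  assert (forall m k, (forall i, (k <= i < k + m)%nat -> f i <= c) -> sumL f (seq k m) <= INR m * c).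
  { induction m as [|m IH]; intros k Hk. simpl; lra.
    rewrite S_INR. simpl seq. rewrite sumL_cons.
    assert (f k <= c) by (apply Hk; lia).
    assert (sumL f (seq (S k) m) <= INR m * c) by (apply IH; intros; apply Hk; lia). lra. }
  apply H0. intros; apply H; lia.
Qed.

Lemma sumL_swap (F : nat -> nat -> R) l1 l2 :
  sumL (fun i => sumL (fun k => F i k) l2) l1 = sumL (fun k => sumL (fun i => F i k) l1) l2.
Proof.
  induction l1 as [|a l1 IH]; simpl.
  - rewrite sumL_zero; auto.
  - rewrite IH. rewrite <- sumL_plus. reflexivity.
Qed.

Lemma sumL_antisym (F : nat -> nat -> R) l :
  (forall i k, In i l -> In k l -> F i k = - F k i) ->
  sumL (fun i => sumL (fun k => F i k) l) l = 0.
Proof.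
  intros H.
  assert (E: sumL (fun i => sumL (fun k => F i k) l) l = - sumL (fun i => sumL (fun k => F i k) l) l).
  { rewrite sumL_swap at 1.
    rewrite <- sumL_opp. apply sumL_ext; intros k Hk.
    rewrite <- sumL_opp. apply sumL_ext; intros i Hi. apply H; auto. }
  lra.
Qed.

Lemma sumL_nonpos_le (f : nat -> R) l p : (forall i, In i l -> f i <= 0) -> In p l -> sumL f l <= f p.
Proof.
  induction l as [|a l IH]; intros H Hp; simpl in *; [contradiction|].
  destruct Hp as [->|Hp].
  - assert (sumL f l <= 0).
    { assert (sumL f l <= sumL (fun _ => 0) l) by (apply sumL_le; intros; apply H; auto).
      rewrite sumL_zero in H0; auto. }
    lra.
  - assert (f a <= 0) by (apply H; auto).
    assert (sumL f l <= f p) by (apply IH; auto). lra.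
Qed.

Lemma sumL_pos_exists (f : nat -> R) l : 0 < sumL f l -> exists i, In i l /\ 0 < f i.
Proof.
  induction l as [|a l IH]; simpl; intros H; [lra|].
  destruct (Rlt_dec 0 (f a)). exists a; auto.
  destruct IH as [i [Hi Hf]]. lra. exists i; auto.
Qed.

Lemma sumL_nonneg (f : nat -> R) l : (forall i, In i l -> 0 <= f i) -> 0 <= sumL f l.
Proof.
  intros H. assert (sumL (fun _ => 0) l <= sumL f l) by (apply sumL_le; auto).
  rewrite sumL_zero in H0; auto.
Qed.

Lemma sumL_ge_elem (f : nat -> R) l p : (forall i, In i l -> 0 <= f i) -> In p l -> f p <= sumL f l.
Proof.
  intros H Hp.
  assert (sumL (fun i => - f i) l <= - f p).
  { apply (sumL_nonpos_le (fun i => - f i)); auto. intros i Hi; specialize (H i Hi); lra. }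
  rewrite sumL_opp in H0; lra.
Qed.

Lemma sumL_split (sel : nat -> bool) f l :
  sumL f l = sumL (fun i => if sel i then f i else 0) l + sumL (fun i => if sel i then 0 else f i) l.
Proof.
  rewrite <- sumL_plus. apply sumL_ext; intros i _. destruct (sel i); lra.
Qed.

Lemma fold_map_sumL (f : nat -> R) l : fold_right Rplus 0 (map f l) = sumL f l.
Proof. induction l; simpl; auto. rewrite IHl; auto. Qed.

Ltac mm := repeat match goal with
  | |- context [Rmin ?a ?b] => destruct (Rle_dec a b); [rewrite (Rmin_left a b) by lra | rewrite (Rmin_right a b) by lra]
  | |- context [Rmax ?a ?b] => destruct (Rle_dec a b); [rewrite (Rmax_right a b) by lra | rewrite (Rmax_left a b) by lra]
  end.

Lemma sat_clamp s x : 0 < s -> sat s x = Rmax (-s) (Rmin x s).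
Proof.
  intros Hs. unfold sat, Defs.sign.
  destruct (Rlt_dec 0 x).
  - rewrite Rabs_pos_eq by lra.
    mm; lra.
  - destruct (Rlt_dec x 0).
    + rewrite Rabs_left by lra. mm; lra.
    + assert (x = 0) by lra. subst. rewrite Rabs_R0. mm; lra.
Qed.

Lemma sat_mono s x y : 0 < s -> x <= y -> sat s x <= sat s y.
Proof. intros; rewrite !sat_clamp by auto. mm; lra. Qed.
Lemma sat_bound s x : 0 < s -> Rabs (sat s x) <= s.
Proof. intros; rewrite sat_clamp by auto. mm;
  apply Rabs_le; lra. Qed.
Lemma sat_le_s s x : 0 < s -> sat s x <= s.
Proof. intros; rewrite sat_clamp by auto. mm; lra. Qed.
Lemma sat_ge_id s x : 0 < s -> x <= s -> x <= sat s x.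
Proof. intros; rewrite sat_clamp by auto. mm; lra. Qed.
Lemma sat_le_id s x : 0 < s -> -s <= x -> sat s x <= x.
Proof. intros; rewrite sat_clamp by auto. mm; lra. Qed.
Lemma sat_opp s x : 0 < s -> sat s (- x) = - sat s x.
Proof. intros; rewrite !sat_clamp by auto. mm; lra. Qed.

Lemma archi (r : R) : exists n : nat, r < INR n.
Proof.
  destruct (archimed (Rabs r)) as [H1 H2].
  assert (0 < IZR (up (Rabs r))) by (pose proof (Rabs_pos r); lra).
  assert (0 < up (Rabs r))%Z by (apply lt_IZR; auto).
  exists (Z.to_nat (up (Rabs r))).
  rewrite INR_IZR_INZ. rewrite Z2Nat.id by lia.
  pose proof (Rle_abs r). lra.
Qed.

Definition Sol N alpha s (x : nat -> R -> R) t0 := forall i, (i < N)%nat -> forall t1 t2, t0 <= t1 -> t1 <= t2 ->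
  ex_RInt (rhs N alpha s x i) t1 t2 /\ x i t2 - x i t1 = RInt (rhs N alpha s x i) t1 t2.

Record Hyp (N : nat) (s : nat -> R) (alpha : nat -> nat -> R -> R) (amax : R) : Prop := {
  h_spos : forall i, (i < N)%nat -> 0 < s i;
  h_sdec : forall i j, (i <= j)%nat -> (j < N)%nat -> s j <= s i;
  h_sym : forall i j t, (i < N)%nat -> (j < N)%nat -> 0 <= t -> alpha i j t = alpha j i t;
  h_nn : forall i j t, (i < N)%nat -> (j < N)%nat -> 0 <= t -> 0 <= alpha i j t;
  h_le : forall i j t, (i < N)%nat -> (j < N)%nat -> 0 <= t -> alpha i j t <= amax;
  h_amax : 0 <= amax }.

Lemma rhs_sum N alpha s x i t : rhs N alpha s x i t =
  sumL (fun j => alpha i j t * (sat (s j) (x j t) - sat (s i) (x i t))) (seq 0 N).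
Proof. unfold rhs. apply fold_map_sumL. Qed.

Definition Bnd N (s : nat -> R) amax := INR N * (amax * (2 * s 0%nat)).

Lemma rhs_bound N s alpha amax x i t : Hyp N s alpha amax -> (i < N)%nat -> 0 <= t ->
  Rabs (rhs N alpha s x i t) <= Bnd N s amax.
Proof.
  intros H Hi Ht. rewrite rhs_sum. unfold Bnd.
  assert (Hs0 : 0 < s 0%nat) by (apply (h_spos _ _ _ _ H); lia).
  assert (Hc : 0 <= amax * (2 * s 0%nat)) by (pose proof (h_amax _ _ _ _ H); nra).
  assert (Hterm : forall j, (j < N)%nat -> Rabs (alpha i j t * (sat (s j) (x j t) - sat (s i) (x i t))) <= amax * (2 * s 0%nat)).
  { intros j Hj. rewrite Rabs_mult.
    pose proof (h_nn _ _ _ _ H i j t Hi Hj Ht). pose proof (h_le _ _ _ _ H i j t Hi Hj Ht).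
    pose proof (sat_bound (s j) (x j t) (h_spos _ _ _ _ H j Hj)).
    pose proof (sat_bound (s i) (x i t) (h_spos _ _ _ _ H i Hi)).
    pose proof (h_sdec _ _ _ _ H 0 j ltac:(lia) Hj).
    pose proof (h_sdec _ _ _ _ H 0 i ltac:(lia) Hi).
    assert (Rabs (sat (s j) (x j t) - sat (s i) (x i t)) <= 2 * s 0%nat).
    { eapply Rle_trans. apply Rabs_triang. rewrite Rabs_Ropp. lra. }
    rewrite Rabs_pos_eq by lra. apply Rmult_le_compat; auto; apply Rabs_pos. }
  apply Rabs_le. split.
  - assert (sumL (fun j => - (alpha i j t * (sat (s j) (x j t) - sat (s i) (x i t)))) (seq 0 N) <= INR N * (amax * (2 * s 0%nat))).
    { apply sumL_const_le; auto. intros j Hj. specialize (Hterm j Hj).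
      apply Rabs_le_between in Hterm. lra. }
    rewrite sumL_opp in H0. lra.
  - apply sumL_const_le; auto. intros j Hj. specialize (Hterm j Hj). apply Rabs_le_between in Hterm. lra.
Qed.

Lemma lipschitz N s alpha amax x t0 i t1 t2 : Hyp N s alpha amax -> Sol N alpha s x t0 -> 0 <= t0 ->
  (i < N)%nat -> t0 <= t1 -> t1 <= t2 -> Rabs (x i t2 - x i t1) <= Bnd N s amax * (t2 - t1).
Proof.
  intros H HS Ht0 Hi H1 H2. destruct (HS i Hi t1 t2 H1 H2) as [Hex Heq]. rewrite Heq.
  rewrite Rmult_comm. apply abs_RInt_le_const; auto.
  intros t Ht. apply rhs_bound; auto. lra.
Qed.

Lemma rhs_opp N s alpha amax x i t : Hyp N s alpha amax -> (i < N)%nat ->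
  rhs N alpha s (fun j t => - x j t) i t = - rhs N alpha s x i t.
Proof.
  intros H Hi. rewrite !rhs_sum. rewrite <- sumL_opp. apply sumL_ext. intros j Hj.
  apply in_seq in Hj.
  rewrite !sat_opp by (apply (h_spos _ _ _ _ H); lia). ring.
Qed.

Lemma sol_opp N s alpha amax x t0 : Hyp N s alpha amax -> Sol N alpha s x t0 ->
  Sol N alpha s (fun j t => - x j t) t0.
Proof.
  intros H HS i Hi t1 t2 H1 H2. destruct (HS i Hi t1 t2 H1 H2) as [Hex Heq].
  assert (E : forall t, rhs N alpha s (fun j t => - x j t) i t = opp (rhs N alpha s x i t)).
  { intros t. rewrite rhs_opp with (amax := amax); auto. }
  split.
  - eapply ex_RInt_ext. intros; symmetry; apply E. apply (ex_RInt_opp (V:=R_NormedModule)); auto.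
  - rewrite (RInt_ext _ (fun t => opp (rhs N alpha s x i t))) by (intros; apply E).
    rewrite (RInt_opp (V:=R_CompleteNormedModule)) by auto. rewrite <- Heq. unfold opp; simpl. ring.
Qed.

Lemma sumL_RInt (F : nat -> R -> R) l a b : (forall i, In i l -> ex_RInt (F i) a b) ->
  ex_RInt (fun t => sumL (fun i => F i t) l) a b /\
  RInt (fun t => sumL (fun i => F i t) l) a b = sumL (fun i => RInt (F i) a b) l.
Proof.
  induction l as [|c l IH]; intros H.
  - simpl. split. apply (ex_RInt_const a b 0). rewrite RInt_const. unfold scal; simpl; unfold mult; simpl. ring.
  - destruct IH as [IH1 IH2]. intros; apply H; right; auto.
    assert (Hc : ex_RInt (F c) a b) by (apply H; left; auto).
    simpl. split.
    + apply (ex_RInt_plus (F c) (fun t => sumL (fun i => F i t) l)); auto.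
    + rewrite <- IH2. apply (RInt_plus (F c) (fun t => sumL (fun i => F i t) l)); auto.
Qed.

Lemma sum_int N s alpha amax x t0 (sel : nat -> bool) (g : R -> R) t1 t2 :
  Hyp N s alpha amax -> Sol N alpha s x t0 -> t0 <= t1 -> t1 <= t2 ->
  (forall tau, t1 <= tau <= t2 -> sumL (fun i => if sel i then rhs N alpha s x i tau else 0) (seq 0 N) <= g tau) ->
  ex_RInt g t1 t2 ->
  sumL (fun i => if sel i then x i t2 - x i t1 else 0) (seq 0 N) <= RInt g t1 t2.
Proof.
  intros H HS H1 H2 Hb Hg.
  set (F := fun i tau => if sel i then rhs N alpha s x i tau else 0).
  assert (HF : forall i, In i (seq 0 N) -> ex_RInt (F i) t1 t2).
  { intros i Hi. apply in_seq in Hi. unfold F. destruct (sel i).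
    - apply (HS i ltac:(lia) t1 t2 H1 H2).
    - apply (ex_RInt_const t1 t2 0). }
  destruct (sumL_RInt F (seq 0 N) t1 t2 HF) as [E1 E2].
  replace (sumL (fun i => if sel i then x i t2 - x i t1 else 0) (seq 0 N))
    with (sumL (fun i => RInt (F i) t1 t2) (seq 0 N)).
  2:{ apply sumL_ext. intros i Hi. apply in_seq in Hi. unfold F. destruct (sel i).
      - symmetry. apply (HS i ltac:(lia) t1 t2 H1 H2).
      - rewrite RInt_const. unfold scal; simpl; unfold mult; simpl. ring. }
  rewrite <- E2. apply RInt_le; auto.
  intros tau Ht. apply Hb. lra.
Qed.

Definition Gt alpha s (x : nat -> R -> R) (i k : nat) (t : R) :=
  alpha i k t * (sat (s k) (x k t) - sat (s i) (x i t)).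

Lemma cut_eq N s alpha amax x (sel : nat -> bool) t : Hyp N s alpha amax -> 0 <= t ->
  sumL (fun i => if sel i then rhs N alpha s x i t else 0) (seq 0 N) =
  sumL (fun i => if sel i then sumL (fun k => if sel k then 0 else Gt alpha s x i k t) (seq 0 N) else 0) (seq 0 N).
Proof.
  intros H Ht.
  transitivity (sumL (fun i => sumL (fun k => if sel i then (if sel k then Gt alpha s x i k t else 0) else 0) (seq 0 N)) (seq 0 N) +
    sumL (fun i => if sel i then sumL (fun k => if sel k then 0 else Gt alpha s x i k t) (seq 0 N) else 0) (seq 0 N)).
  - rewrite <- sumL_plus. apply sumL_ext; intros i Hi.
    destruct (sel i) eqn:Ei.
    + rewrite rhs_sum. rewrite (sumL_split sel). reflexivity.
    + rewrite sumL_zero. ring.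
  - rewrite sumL_antisym. ring.
    intros i k Hi Hk. apply in_seq in Hi. apply in_seq in Hk.
    destruct (sel i), (sel k); try ring.
    unfold Gt. rewrite (h_sym _ _ _ _ H i k t) by (auto; lia). ring.
Qed.

Definition W N (x : nat -> R -> R) lam t :=
  sumL (fun i => if (i <? N - 1)%nat then Rmax (x i t - lam) 0 else 0) (seq 0 N).

Definition rlt (a b : R) : bool := if Rlt_dec a b then true else false.

Lemma rlt_true a b : rlt a b = true <-> a < b.
Proof. unfold rlt; destruct Rlt_dec; split; intros; auto; try discriminate; lra. Qed.
Lemma rlt_false a b : rlt a b = false <-> b <= a.
Proof. unfold rlt; destruct Rlt_dec; split; intros; auto; try discriminate; lra. Qed.

Lemma Bnd_nn N s alpha amax : Hyp N s alpha amax -> (0 < N)%nat -> 0 <= Bnd N s amax.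
Proof.
  intros H HN. unfold Bnd. pose proof (pos_INR N). pose proof (h_amax _ _ _ _ H).
  pose proof (h_spos _ _ _ _ H 0 HN). apply Rmult_le_pos; auto. nra.
Qed.

Lemma W_step N s alpha amax x t0 lam t h :
  Hyp N s alpha amax -> Sol N alpha s x t0 -> 0 <= t0 -> (2 <= N)%nat ->
  s (N - 1)%nat <= lam -> (forall i, (i < N - 1)%nat -> lam < s i) ->
  t0 <= t -> 0 <= h ->
  W N x lam (t + h) - W N x lam t <= INR N * (INR N * (amax * (2 * Bnd N s amax * h))) * h.
Proof.
  intros H HS Ht0 HN Hl1 Hl2 Ht Hh.
  set (B := Bnd N s amax).
  assert (HB : 0 <= B) by (apply Bnd_nn with alpha; auto; lia).
  set (sel := fun i => ((i <? N - 1)%nat && rlt lam (x i (t + h)))%bool).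
  assert (Hamax := h_amax _ _ _ _ H).
  assert (HsN : 0 < s (N - 1)%nat) by (apply (h_spos _ _ _ _ H); lia).
  assert (Step1 : W N x lam (t + h) - W N x lam t <= sumL (fun i => if sel i then x i (t + h) - x i t else 0) (seq 0 N)).
  { unfold W. rewrite <- sumL_minus. apply sumL_le. intros i Hi. unfold sel.
    destruct (i <? N - 1)%nat; simpl; [|lra].
    destruct (rlt lam (x i (t + h))) eqn:E.
    - apply rlt_true in E. mm; lra.
    - apply rlt_false in E. mm; lra. }
  eapply Rle_trans. apply Step1.
  set (c := INR N * (INR N * (amax * (2 * B * h)))).
  replace (c * h) with (RInt (fun _ => c) t (t + h)).
  2:{ rewrite RInt_const. unfold scal; simpl; unfold mult; simpl. ring. }
  apply sum_int with (s := s) (alpha := alpha) (amax := amax) (t0 := t0); auto; try lra.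
  2: apply (ex_RInt_const (V:=R_NormedModule)).
  intros tau Htau.
  assert (Hc' : 0 <= amax * (2 * B * h)) by (apply Rmult_le_pos; auto; apply Rmult_le_pos; auto; lra).
  assert (Hc'' : 0 <= INR N * (amax * (2 * B * h))) by (apply Rmult_le_pos; auto; apply pos_INR).
  rewrite (cut_eq N s alpha amax x sel tau H) by lra.
  unfold c. apply sumL_const_le.
  { auto. }
  intros i Hi. destruct (sel i) eqn:Ei; [|auto].
  apply sumL_const_le. auto.
  intros k Hk. destruct (sel k) eqn:Ek; [auto|].
  unfold sel in Ei, Ek. apply Bool.andb_true_iff in Ei. destruct Ei as [Ei1 Ei2].
  apply Nat.ltb_lt in Ei1. apply rlt_true in Ei2.
  assert (Hxi : lam - B * h <= x i tau).
  { pose proof (lipschitz N s alpha amax x t0 i tau (t + h) H HS Ht0 Hi ltac:(lra) ltac:(lra)).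
    fold B in H0. apply Rabs_le_between in H0. assert (B * (t + h - tau) <= B * h) by (apply Rmult_le_compat_l; lra). lra. }
  assert (Hsi : lam < s i) by (apply Hl2; auto).
  assert (Hyi : lam - B * h <= sat (s i) (x i tau)).
  { apply Rle_trans with (sat (s i) (lam - B * h)).
    apply sat_ge_id; nra. apply sat_mono; lra. }
  assert (Hyk : sat (s k) (x k tau) <= lam + B * h).
  { destruct (k <? N - 1)%nat eqn:Ek1; simpl in Ek.
    - apply Nat.ltb_lt in Ek1. apply rlt_false in Ek.
      assert (Hxk : x k tau <= lam + B * h).
      { pose proof (lipschitz N s alpha amax x t0 k tau (t + h) H HS Ht0 Hk ltac:(lra) ltac:(lra)).
        fold B in H0. apply Rabs_le_between in H0. assert (B * (t + h - tau) <= B * h) by (apply Rmult_le_compat_l; lra). lra. }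
      assert (0 < s k) by (apply (h_spos _ _ _ _ H); lia).
      eapply Rle_trans. apply sat_mono. lra. apply Hxk. apply sat_le_id. lra. nra.
    - apply Nat.ltb_ge in Ek1.
      assert (k = (N - 1)%nat) by lia. subst k.
      pose proof (sat_le_s (s (N - 1)%nat) (x (N - 1)%nat tau) HsN). nra. }
  unfold Gt.
  pose proof (h_nn _ _ _ _ H i k tau ltac:(lia) Hk ltac:(lra)).
  pose proof (h_le _ _ _ _ H i k tau ltac:(lia) Hk ltac:(lra)).
  set (d := sat (s k) (x k tau) - sat (s i) (x i tau)) in *.
  assert (d <= 2 * B * h) by (unfold d; lra).
  destruct (Rle_dec d 0). nra. nra.
Qed.

Lemma W_mono N s alpha amax x t0 lam t1 t2 :
  Hyp N s alpha amax -> Sol N alpha s x t0 -> 0 <= t0 -> (2 <= N)%nat ->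
  s (N - 1)%nat <= lam -> (forall i, (i < N - 1)%nat -> lam < s i) ->
  t0 <= t1 -> t1 <= t2 -> W N x lam t2 <= W N x lam t1.
Proof.
  intros H HS Ht0 HN Hl1 Hl2 H1 H2.
  set (C := INR N * (INR N * (amax * (2 * Bnd N s amax)))).
  assert (HC : forall n, (0 < n)%nat -> W N x lam t2 - W N x lam t1 <= C * ((t2 - t1) * (t2 - t1)) / INR n).
  { intros n Hn. set (h := (t2 - t1) / INR n).
    assert (Hnr : 0 < INR n) by (apply lt_0_INR; auto).
    assert (Hh : 0 <= h) by (unfold h; apply Rmult_le_pos; [lra | left; apply Rinv_0_lt_compat; auto]).
    assert (Hk : forall k, W N x lam (t1 + INR k * h) - W N x lam t1 <= INR k * (C * h * h)).
    { induction k as [|k IH].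
      - simpl. replace (t1 + 0 * h) with t1 by ring. lra.
      - rewrite S_INR.
        pose proof (W_step N s alpha amax x t0 lam (t1 + INR k * h) h H HS Ht0 HN Hl1 Hl2) as Hs.
        assert (0 <= INR k * h) by (apply Rmult_le_pos; auto; apply pos_INR).
        specialize (Hs ltac:(lra) Hh).
        replace (t1 + (INR k + 1) * h) with (t1 + INR k * h + h) by ring.
        unfold C. unfold C in IH. nra. }
    specialize (Hk n). replace (t1 + INR n * h) with t2 in Hk by (unfold h; field; lra).
    replace (C * ((t2 - t1) * (t2 - t1)) / INR n) with (INR n * (C * h * h)) by (unfold h; field; lra).
    auto. }
  destruct (Rle_dec (W N x lam t2 - W N x lam t1) 0) as [Hd|Hd]. lra.
  exfalso. set (d := W N x lam t2 - W N x lam t1) in *.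
  destruct (archi (C * ((t2 - t1) * (t2 - t1)) / d)) as [n Hn].
  assert (0 < INR n).
  { assert (0 <= C * ((t2 - t1) * (t2 - t1)) / d).
    { unfold C. pose proof (pos_INR N). pose proof (h_amax _ _ _ _ H).
      assert (0 <= Bnd N s amax) by (apply Bnd_nn with alpha; auto; lia).
      apply Rmult_le_pos. apply Rmult_le_pos.
      repeat (apply Rmult_le_pos; auto); lra. nra. left; apply Rinv_0_lt_compat; lra. }
    lra. }
  assert (Hn0 : (0 < n)%nat) by (apply INR_lt; simpl; lra).
  specialize (HC n Hn0).
  assert (C * ((t2 - t1) * (t2 - t1)) < d * INR n).
  { apply (Rmult_lt_compat_r d) in Hn; [|lra]. unfold Rdiv in Hn.
    rewrite Rmult_assoc, Rinv_l in Hn by lra. lra. }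
  assert (d * INR n <= C * ((t2 - t1) * (t2 - t1))).
  { apply (Rmult_le_compat_r (INR n)) in HC; [|lra]. unfold Rdiv in HC.
    rewrite Rmult_assoc, Rinv_l in HC by lra. lra. }
  lra.
Qed.

Lemma eventually_stable (f : R -> R) t0 eps : 0 < eps ->
  (forall t1 t2, t0 <= t1 -> t1 <= t2 -> f t2 <= f t1) -> (forall t, t0 <= t -> 0 <= f t) ->
  exists T, t0 <= T /\ forall t, T <= t -> f T - f t <= eps.
Proof.
  intros He Hm Hp.
  apply NNPP. intros Hn.
  assert (Hall : forall T, t0 <= T -> exists t, T <= t /\ f T - f t > eps).
  { intros T HT. apply NNPP. intros Hc. apply Hn. exists T. split; auto.
    intros t Ht. apply Rnot_lt_le. intros Hl. apply Hc. exists t. split; auto. }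
  assert (Hk : forall k : nat, exists T, t0 <= T /\ f T <= f t0 - INR k * eps).
  { induction k as [|k IH].
    - exists t0. simpl. split; lra.
    - destruct IH as [T [HT HfT]]. destruct (Hall T HT) as [t [Ht Hft]].
      exists t. rewrite S_INR. split; lra. }
  destruct (archi (f t0 / eps)) as [k Hk'].
  destruct (Hk k) as [T [HT HfT]].
  specialize (Hp T HT).
  assert (f t0 < INR k * eps).
  { apply (Rmult_lt_compat_r eps) in Hk'; auto. unfold Rdiv in Hk'.
    rewrite Rmult_assoc, Rinv_l in Hk' by lra. lra. }
  lra.
Qed.

Lemma eventually_stable_fam (F : nat -> R -> R) t0 eps K : 0 < eps ->
  (forall k t1 t2, (k <= K)%nat -> t0 <= t1 -> t1 <= t2 -> F k t2 <= F k t1) ->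
  (forall k t, (k <= K)%nat -> t0 <= t -> 0 <= F k t) ->
  exists T, t0 <= T /\ forall k t, (k <= K)%nat -> T <= t -> F k T - F k t <= eps.
Proof.
  intros He Hm Hp. induction K as [|K IH].
  - destruct (eventually_stable (F 0%nat) t0 eps He) as [T [HT H]].
    { intros; apply Hm; auto. } { intros; apply Hp; auto. }
    exists T; split; auto. intros k t Hk Ht. assert (k = 0%nat) by lia. subst; auto.
  - destruct IH as [T1 [HT1 H1]].
    { intros; apply Hm; auto. } { intros; apply Hp; auto. }
    destruct (eventually_stable (F (S K)) t0 eps He) as [T2 [HT2 H2]].
    { intros; apply Hm; auto. } { intros; apply Hp; auto. }
    exists (Rmax T1 T2). split. eapply Rle_trans; [apply HT1|apply Rmax_l].
    intros k t Hk Ht.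
    assert (T1 <= Rmax T1 T2) by apply Rmax_l. assert (T2 <= Rmax T1 T2) by apply Rmax_r.
    destruct (Nat.eq_dec k (S K)) as [->|Hne].
    + specialize (H2 t ltac:(lra)).
      pose proof (Hm (S K) T2 (Rmax T1 T2) ltac:(lia) HT2 ltac:(lra)). lra.
    + specialize (H1 k t ltac:(lia) ltac:(lra)).
      pose proof (Hm k T1 (Rmax T1 T2) ltac:(lia) HT1 ltac:(lra)). lra.
Qed.

Lemma pigeon (H : nat -> R) (M : nat) (d R0 : R) :
  (forall k, (k <= 2 * M + 1)%nat -> 0 <= H k - H (S k)) ->
  H 0%nat - H 1%nat <= R0 -> R0 < INR M * d ->
  exists m, (m < M)%nat /\ (H (2 * m)%nat - H (2 * m + 1)%nat) - (H (2 * m + 2)%nat - H (2 * m + 3)%nat) < d.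
Proof.
  intros Hd H01 HR. apply NNPP. intros Hn.
  assert (Hall : forall m, (m < M)%nat -> d <= (H (2 * m)%nat - H (2 * m + 1)%nat) - (H (2 * m + 2)%nat - H (2 * m + 3)%nat)).
  { intros m Hm. apply Rnot_lt_le. intros Hl. apply Hn. exists m; auto. }
  assert (Hind : forall m, (m <= M)%nat -> INR m * d <= (H 0%nat - H 1%nat) - (H (2 * m)%nat - H (2 * m + 1)%nat)).
  { induction m as [|m IH]; intros Hm.
    - simpl. lra.
    - rewrite S_INR. specialize (IH ltac:(lia)). specialize (Hall m ltac:(lia)).
      replace (2 * S m)%nat with (2 * m + 2)%nat by lia.
      replace (2 * m + 2 + 1)%nat with (2 * m + 3)%nat by lia. lra. }
  specialize (Hind M (le_n _)). specialize (Hd (2 * M)%nat ltac:(lia)).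
  replace (S (2 * M)) with (2 * M + 1)%nat in Hd by lia. lra.
Qed.

Definition phi a d x := Rmax (x - a) 0 - Rmax (x - (a + d)) 0 - Rmax (x - (a + 2 * d)) 0 + Rmax (x - (a + 3 * d)) 0.

Lemma phi_nn a d x : 0 < d -> 0 <= phi a d x.
Proof. intros; unfold phi; mm; lra. Qed.

Lemma phi_band a d x : 0 < d -> a + d <= x <= a + 2 * d -> phi a d x = d.
Proof. intros; unfold phi; mm; lra. Qed.

Lemma W_phi N x a d t : W N x a t - W N x (a + d) t - W N x (a + 2 * d) t + W N x (a + 3 * d) t =
  sumL (fun i => if (i <? N - 1)%nat then phi a d (x i t) else 0) (seq 0 N).
Proof.
  unfold W. rewrite <- !sumL_minus. rewrite <- sumL_plus. apply sumL_ext; intros i _.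
  destruct (i <? N - 1)%nat; unfold phi; ring.
Qed.

Lemma no_band N x a d t i : 0 < d -> (i < N - 1)%nat ->
  W N x a t - W N x (a + d) t - W N x (a + 2 * d) t + W N x (a + 3 * d) t < d ->
  ~ (a + d <= x i t <= a + 2 * d).
Proof.
  intros Hd Hi HW Hb. rewrite W_phi in HW.
  assert (phi a d (x i t) <= sumL (fun i => if (i <? N - 1)%nat then phi a d (x i t) else 0) (seq 0 N)).
  { replace (phi a d (x i t)) with ((fun i => if (i <? N - 1)%nat then phi a d (x i t) else 0) i)
      by (simpl; replace (i <? N - 1)%nat with true by (symmetry; apply Nat.ltb_lt; auto); auto).
    apply (sumL_ge_elem (fun i => if (i <? N - 1)%nat then phi a d (x i t) else 0)).
    - intros k _. destruct (k <? N - 1)%nat; [apply phi_nn; auto|lra].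
    - apply in_seq. lia. }
  rewrite phi_band in H by auto. lra.
Qed.

Lemma lip_cont (g : R -> R) K : 0 <= K -> (forall a b, Rabs (g a - g b) <= K * Rabs (a - b)) -> continuity g.
Proof.
  intros HK Hl x. unfold continuity_pt, continue_in, limit1_in, limit_in. intros eps He.
  exists (eps / (K + 1)). split. apply Rdiv_lt_0_compat; lra.
  intros y [_ Hy]. simpl in *. unfold R_dist in *.
  eapply Rle_lt_trans. apply Hl.
  apply Rle_lt_trans with ((K + 1) * Rabs (y - x)). pose proof (Rabs_pos (y - x)). nra.
  apply (Rmult_lt_compat_l (K + 1)) in Hy; [|lra].
  replace ((K + 1) * (eps / (K + 1))) with eps in Hy by (field; lra). lra.
Qed.

Definition clampT T t tau := Rmax T (Rmin tau t).

Lemma clampT_in T t tau : T <= t -> T <= clampT T t tau <= t.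
Proof. intros; unfold clampT; mm; lra. Qed.

Lemma clampT_lip T t a b : T <= t -> Rabs (clampT T t a - clampT T t b) <= Rabs (a - b).
Proof.
  intros; unfold clampT.
  destruct (Rle_dec a b).
  - rewrite (Rabs_left1 (a - b)) by lra. apply Rabs_le. mm; lra.
  - rewrite (Rabs_pos_eq (a - b)) by lra. apply Rabs_le. mm; lra.
Qed.

Lemma clampT_id T t tau : T <= tau <= t -> clampT T t tau = tau.
Proof. intros; unfold clampT; mm; lra. Qed.

Lemma stay (f : R -> R) B T t l u : 0 <= B -> T <= t -> l < u ->
  (forall a b, T <= a -> a <= b -> b <= t -> Rabs (f b - f a) <= B * (b - a)) ->
  (forall tau, T <= tau <= t -> ~ (l <= f tau <= u)) ->
  (u < f T -> u < f t) /\ (f T < l -> f t < l).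
Proof.
  intros HB Ht Hlu Hl Hb.
  assert (Hcont : forall c, continuity (fun tau => f (clampT T t tau) - c)).
  { intros c. apply lip_cont with B; auto. intros a b.
    pose proof (clampT_in T t a Ht). pose proof (clampT_in T t b Ht).
    pose proof (clampT_lip T t a b Ht).
    replace (f (clampT T t a) - c - (f (clampT T t b) - c)) with (f (clampT T t a) - f (clampT T t b)) by ring.
    destruct (Rle_dec (clampT T t a) (clampT T t b)).
    - specialize (Hl (clampT T t a) (clampT T t b) ltac:(lra) r ltac:(lra)). rewrite <- Rabs_Ropp.
      replace (- (f (clampT T t a) - f (clampT T t b))) with (f (clampT T t b) - f (clampT T t a)) by ring.
      eapply Rle_trans. apply Hl. rewrite <- (Rabs_pos_eq (clampT T t b - clampT T t a)) by lra.
      rewrite Rabs_minus_sym. apply Rmult_le_compat_l; auto.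
    - specialize (Hl (clampT T t b) (clampT T t a) ltac:(lra) ltac:(lra) ltac:(lra)).
      eapply Rle_trans. apply Hl. rewrite <- (Rabs_pos_eq (clampT T t a - clampT T t b)) by lra.
      apply Rmult_le_compat_l; auto. }
  destruct (Req_dec T t) as [<-|Hne]; [split; auto|].
  assert (HTt : T < t) by lra.
  split; intros Hf.
  - apply Rnot_le_lt. intros Hft.
    destruct (Req_dec (f t) u). { apply (Hb t); lra. }
    destruct (IVT (fun tau => - (f (clampT T t tau) - u)) T t) as [z [Hz1 Hz2]]; auto.
    { apply continuity_opp. apply Hcont. }
    { rewrite clampT_id by lra. lra. }
    { rewrite clampT_id by lra. lra. }
    rewrite clampT_id in Hz2 by lra. apply (Hb z); lra.
  - apply Rnot_le_lt. intros Hft.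
    destruct (Req_dec (f t) l). { apply (Hb t); lra. }
    destruct (IVT (fun tau => f (clampT T t tau) - l) T t) as [z [Hz1 Hz2]]; auto.
    { rewrite clampT_id by lra. lra. }
    { rewrite clampT_id by lra. lra. }
    rewrite clampT_id in Hz2 by lra. apply (Hb z); lra.
Qed.

Lemma reach_lt N E i j : reach N E i j -> (j < N)%nat.
Proof. induction 1; auto. Qed.

Lemma cross N (E : nat -> nat -> Prop) (sel : nat -> bool) u v : reach N E u v -> sel u = true -> sel v = false ->
  exists p q, (p < N)%nat /\ (q < N)%nat /\ sel p = true /\ sel q = false /\ E p q.
Proof.
  induction 1 as [i Hi|i j k Hr IH Hk Ejk]; intros Hu Hv.
  - congruence.
  - destruct (sel j) eqn:Ej.
    + exists j, k. repeat split; auto. eapply reach_lt; eauto.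
    + apply IH; auto.
Qed.

Lemma int_big (a : R -> R) amax T M : integral_infinite a -> 0 <= T ->
  (forall t, 0 <= t -> a t <= amax) -> 0 <= amax ->
  exists t, T <= t /\ ex_RInt a T t /\ M <= RInt a T t.
Proof.
  intros Hi HT Ha Ham.
  destruct (Hi (Rmax M 0 + amax * T + 1)) as [T2 [HT2 [pr Hpr]]].
  pose proof (Rmax_l M 0). pose proof (Rmax_r M 0).
  rewrite <- RInt_Reals in Hpr. apply ex_RInt_Reals_1 in pr.
  destruct (Rle_dec T2 T).
  - exfalso.
    assert (RInt a 0 T2 <= RInt (fun _ => amax) 0 T2).
    { apply RInt_le; auto. apply (ex_RInt_const (V:=R_NormedModule)). intros; apply Ha; lra. }
    rewrite RInt_const in H1. unfold scal in H1; simpl in H1; unfold mult in H1; simpl in H1.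
    assert (amax * T2 <= amax * T) by (apply Rmult_le_compat_l; lra).
    lra.
  - exists T2. split; [lra|].
    assert (E1 : ex_RInt a 0 T) by (apply (ex_RInt_Chasles_1 a 0 T T2); auto; lra).
    assert (E2 : ex_RInt a T T2) by (apply (ex_RInt_Chasles_2 a 0 T T2); auto; lra).
    split; auto.
    pose proof (RInt_Chasles a 0 T T2 E1 E2). unfold plus in H1; simpl in H1.
    assert (RInt a 0 T <= RInt (fun _ => amax) 0 T).
    { apply RInt_le; auto. apply (ex_RInt_const (V:=R_NormedModule)). intros; apply Ha; lra. }
    rewrite RInt_const in H2. unfold scal in H2; simpl in H2; unfold mult in H2; simpl in H2.
    lra.
Qed.

Lemma W_nn N x lam t : 0 <= W N x lam t.
Proof. unfold W. apply sumL_nonneg. intros i _. destruct (i <? N - 1)%nat; [apply Rmax_r|lra]. Qed.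

Lemma W_lam_mono N x l1 l2 t : l1 <= l2 -> W N x l2 t <= W N x l1 t.
Proof. intros H. unfold W. apply sumL_le. intros i _. destruct (i <? N - 1)%nat; [mm; lra|lra]. Qed.

Lemma W_lam_diff N x l d t : 0 <= d -> W N x l t - W N x (l + d) t <= INR N * d.
Proof.
  intros H. unfold W. rewrite <- sumL_minus. apply sumL_const_le; auto.
  intros i _. destruct (i <? N - 1)%nat; [mm; lra|lra].
Qed.

Lemma W_zero_le N x lam t i : W N x lam t <= 0 -> (i < N - 1)%nat -> x i t <= lam.
Proof.
  intros H Hi.
  assert (Rmax (x i t - lam) 0 <= W N x lam t).
  { unfold W. replace (Rmax (x i t - lam) 0) with ((fun i => if (i <? N - 1)%nat then Rmax (x i t - lam) 0 else 0) i)
      by (simpl; replace (i <? N - 1)%nat with true by (symmetry; apply Nat.ltb_lt; auto); auto).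
    apply (sumL_ge_elem (fun i => if (i <? N - 1)%nat then Rmax (x i t - lam) 0 else 0)).
    - intros k _. destruct (k <? N - 1)%nat; [apply Rmax_r|lra].
    - apply in_seq. lia. }
  pose proof (Rmax_l (x i t - lam) 0). lra.
Qed.

Lemma upper N s alpha amax x t0 b :
  Hyp N s alpha amax -> Sol N alpha s x t0 -> 0 <= t0 -> (2 <= N)%nat ->
  integrally_connected N alpha ->
  s (N - 1)%nat < b -> (forall i, (i < N - 1)%nat -> b < s i) ->
  exists T, t0 <= T /\ forall i t, (i < N - 1)%nat -> T <= t -> x i t <= b.
Proof.
  intros H HS Ht0 HN Hconn Hb1 Hb2.
  destruct (classic (exists T, t0 <= T /\ W N x b T <= 0)) as [[T [HT HW]]|Hno].
  { exists T. split; auto. intros i t Hi Ht.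
    apply (W_zero_le N x b t i); auto.
    pose proof (W_mono N s alpha amax x t0 b T t H HS Ht0 HN ltac:(lra) Hb2 HT Ht).
    lra. }
  exfalso.
  assert (Hpos : forall T, t0 <= T -> 0 < W N x b T).
  { intros T HT. apply Rnot_le_lt. intros Hle. apply Hno. exists T; auto. }
  set (a := (s (N - 1)%nat + b) / 2).
  set (M := (4 * N + 4)%nat).
  set (K := (2 * M + 1)%nat).
  assert (HKr : 0 < INR K) by (apply lt_0_INR; unfold K; lia).
  set (d := (b - a) / INR K).
  assert (Hd : 0 < d) by (unfold d, a; apply Rdiv_lt_0_compat; lra).
  set (lam := fun k : nat => a + INR k * d).
  assert (HlamK : lam K = b) by (unfold lam, d; field; lra).
  assert (Hlam_range : forall k, (k <= K)%nat -> a <= lam k <= b).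
  { intros k Hk. unfold lam. split.
    - pose proof (pos_INR k). nra.
    - rewrite <- HlamK. unfold lam. apply le_INR in Hk. nra. }
  assert (Hlam_add : forall k j, lam (k + j)%nat = lam k + INR j * d).
  { intros k j. unfold lam. rewrite plus_INR. ring. }
  assert (Ha1 : s (N - 1)%nat < a) by (unfold a; lra).
  assert (HsN : 0 < s (N - 1)%nat) by (apply (h_spos _ _ _ _ H); lia).
  set (F := fun k t => W N x (lam k) t).
  destruct (eventually_stable_fam F t0 (d / 8) K) as [T [HT Hstab]].
  { lra. }
  { intros k t1 t2 Hk H1 H2. unfold F. apply (W_mono N s alpha amax x t0); auto.
    - pose proof (Hlam_range k Hk). lra.
    - intros i Hi. pose proof (Hlam_range k Hk). pose proof (Hb2 i Hi). lra. }
  { intros; apply W_nn. }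
  assert (HMr : INR M = 4 * INR N + 4) by (unfold M; rewrite plus_INR, mult_INR; simpl; ring).
  destruct (pigeon (fun k => F k T) M (d / 4) (INR N * d)) as [m [Hm HG]].
  { intros k Hk. unfold F. pose proof (W_lam_mono N x (lam k) (lam (S k)) T).
    assert (lam k <= lam (S k)) by (unfold lam; rewrite S_INR; nra). lra. }
  { unfold F. replace (lam 1%nat) with (lam 0%nat + d) by (unfold lam; simpl; ring). apply W_lam_diff; lra. }
  { rewrite HMr. pose proof (pos_INR N). nra. }
  cbv beta in HG.
  set (a' := lam (2 * m)%nat) in *.
  assert (E1 : lam (2 * m + 1)%nat = a' + d) by (unfold a'; rewrite Hlam_add; simpl; ring).
  assert (E2 : lam (2 * m + 2)%nat = a' + 2 * d) by (unfold a'; rewrite Hlam_add; simpl; ring).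
  assert (E3 : lam (2 * m + 3)%nat = a' + 3 * d) by (unfold a'; rewrite Hlam_add; simpl; ring).
  unfold F in HG. assert (HG' : W N x a' T - W N x (a' + d) T - (W N x (a' + 2 * d) T - W N x (a' + 3 * d) T) < d / 4)
    by (rewrite <- E1, <- E2, <- E3; exact HG). clear HG.
  assert (Ha'r : a <= a' <= b) by (apply Hlam_range; unfold K; lia).
  assert (Hur : a' + 2 * d <= b) by (rewrite <- E2; apply Hlam_range; unfold K; lia).
  set (l := a' + d). set (u := a' + 2 * d).
  assert (Hwm : forall lv t1 t2, a <= lv <= b -> t0 <= t1 -> t1 <= t2 -> W N x lv t2 <= W N x lv t1).
  { intros lv t1 t2 Hlv H1 H2. apply (W_mono N s alpha amax x t0); auto. lra.
    intros i Hi. pose proof (Hb2 i Hi). lra. }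
  assert (Hnb : forall t i, T <= t -> (i < N - 1)%nat -> ~ (l <= x i t <= u)).
  { intros t i Ht Hi. apply no_band with N; auto.
    pose proof (Hstab (2 * m + 1)%nat t ltac:(unfold K; lia) Ht) as S1.
    pose proof (Hstab (2 * m + 2)%nat t ltac:(unfold K; lia) Ht) as S2.
    unfold F in S1, S2. rewrite E1 in S1. rewrite E2 in S2.
    pose proof (Hwm a' T t Ha'r HT Ht).
    assert (a <= a' + 3 * d <= b) by (rewrite <- E3; apply Hlam_range; unfold K; lia).
    pose proof (Hwm (a' + 3 * d) T t H1 HT Ht). unfold l, u in *. lra. }
  assert (Hl0 : s (N - 1)%nat < l) by (unfold l; lra).
  assert (Hlu : l < u) by (unfold l, u; lra).
  assert (HB : 0 <= Bnd N s amax) by (apply Bnd_nn with alpha; auto; lia).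
  assert (Hst : forall i t, (i < N - 1)%nat -> T <= t ->
            (u < x i T -> u < x i t) /\ (x i T < l -> x i t < l)).
  { intros i t Hi Ht. apply (stay (x i) (Bnd N s amax) T t l u); auto.
    - intros a1 b1 Ha1' Hab Hb1'. apply (lipschitz N s alpha amax x t0); auto; lia || lra.
    - intros tau Htau. apply Hnb; auto; lra. }
  set (sel := fun i => ((i <? N - 1)%nat && rlt u (x i T))%bool).
  assert (Hsel_t : forall i, sel i = true -> (i < N - 1)%nat /\ forall t, T <= t -> u < x i t).
  { intros i Hi. unfold sel in Hi. apply Bool.andb_true_iff in Hi. destruct Hi as [Hi1 Hi2].
    apply Nat.ltb_lt in Hi1. apply rlt_true in Hi2. split; auto.
    intros t Ht. apply (Hst i t Hi1 Ht); auto. }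
  assert (Hsel_f : forall i, (i < N - 1)%nat -> sel i = false -> forall t, T <= t -> x i t < l).
  { intros i Hi Hs t Ht. unfold sel in Hs.
    replace (i <? N - 1)%nat with true in Hs by (symmetry; apply Nat.ltb_lt; auto).
    simpl in Hs. apply rlt_false in Hs.
    assert (x i T < l).
    { pose proof (Hnb T i ltac:(lra) Hi). apply Rnot_le_lt. intros Hc. apply H0. split; auto. }
    apply (Hst i t Hi Ht); auto. }
  destruct (sumL_pos_exists _ _ (Hpos T HT)) as [i0 [Hi0 Hti0]].
  apply in_seq in Hi0.
  destruct (i0 <? N - 1)%nat eqn:Ei0; [|lra].
  apply Nat.ltb_lt in Ei0.
  assert (Hx0 : b < x i0 T) by (destruct (Rle_dec (x i0 T - b) 0); [rewrite Rmax_right in Hti0 by lra; lra | lra]).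
  assert (Hsel0 : sel i0 = true).
  { unfold sel. apply Bool.andb_true_iff. split. apply Nat.ltb_lt; auto. apply rlt_true. unfold u. lra. }
  assert (HselN : sel (N - 1)%nat = false).
  { unfold sel. replace (N - 1 <? N - 1)%nat with false by (symmetry; apply Nat.ltb_ge; lia). auto. }
  destruct (cross N (integral_edge alpha) sel i0 (N - 1)%nat (Hconn i0 (N - 1)%nat ltac:(lia) ltac:(lia)) Hsel0 HselN)
    as [p [q [Hp [Hq [Hselp [Hselq Hpq]]]]]].
  assert (Hterm : forall tau i k, T <= tau -> sel i = true -> (k < N)%nat -> sel k = false ->
            Gt alpha s x i k tau <= - d * alpha i k tau).
  { intros tau i k Htau Hi Hk Hsk. 
    destruct (Hsel_t i Hi) as [Hi1 Hi2].
    assert (Hsi : b < s i) by auto.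
    assert (Hyi : u <= sat (s i) (x i tau)).
    { apply Rle_trans with (sat (s i) u). apply sat_ge_id; (unfold l, u in *; lra).
      apply sat_mono. (unfold l, u in *; lra). left; apply Hi2; auto. }
    assert (Hyk : sat (s k) (x k tau) <= l).
    { destruct (Nat.lt_ge_cases k (N - 1)) as [Hk1|Hk1].
      - pose proof (Hsel_f k Hk1 Hsk tau Htau).
        assert (0 < s k) by (apply (h_spos _ _ _ _ H); lia).
        apply Rle_trans with (sat (s k) l). apply sat_mono; (unfold l, u in *; lra). apply sat_le_id; (unfold l, u in *; lra).
      - assert (k = (N - 1)%nat) by lia. subst k.
        pose proof (sat_le_s (s (N - 1)%nat) (x (N - 1)%nat tau) HsN). (unfold l, u in *; lra). }
    unfold Gt. pose proof (h_nn _ _ _ _ H i k tau ltac:(lia) Hk ltac:((unfold l, u in *; lra))).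
    assert (sat (s k) (x k tau) - sat (s i) (x i tau) <= - d) by (unfold l, u in *; lra).
    nra. }
  set (C0 := sumL (fun i => if sel i then u - x i T else 0) (seq 0 N)).
  destruct (int_big (alpha p q) amax T (- C0 / d + 1) Hpq ltac:(lra)) as [t1 [Ht1 [Hex Hint]]].
  { intros t Ht. apply (h_le _ _ _ _ H); auto. }
  { apply (h_amax _ _ _ _ H). }
  assert (Hsum := sum_int N s alpha amax x t0 sel (fun tau => -d * alpha p q tau) T t1 H HS HT Ht1).
  assert (Hg : ex_RInt (fun tau => -d * alpha p q tau) T t1) by (apply (ex_RInt_scal (V:=R_NormedModule) (alpha p q) T t1 (-d)); auto).
  assert (HgI : RInt (fun tau => -d * alpha p q tau) T t1 = -d * RInt (alpha p q) T t1)
    by (apply (RInt_scal (V:=R_CompleteNormedModule) (alpha p q) T t1 (-d)); auto).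
  assert (Hpt : forall tau, T <= tau <= t1 -> sumL (fun i => if sel i then rhs N alpha s x i tau else 0) (seq 0 N) <= -d * alpha p q tau).
  { intros tau Htau.
    rewrite (cut_eq N s alpha amax x sel tau H) by lra.
    set (inner := fun i => sumL (fun k => if sel k then 0 else Gt alpha s x i k tau) (seq 0 N)).
    assert (Hin : forall i, sel i = true -> inner i <= 0).
    { intros i Hi. unfold inner.
      assert (sumL (fun k => if sel k then 0 else Gt alpha s x i k tau) (seq 0 N) <= sumL (fun _ => 0) (seq 0 N)).
      { apply sumL_le. intros k Hk. apply in_seq in Hk. destruct (sel k) eqn:Ek; [lra|].
        pose proof (Hterm tau i k ltac:(lra) Hi ltac:(lia) Ek).
        pose proof (h_nn _ _ _ _ H i k tau ltac:(destruct (Hsel_t i Hi); lia) ltac:(lia) ltac:(lra)). nra. }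
      rewrite sumL_zero in H0. auto. }
    eapply Rle_trans.
    apply (sumL_nonpos_le (fun i => if sel i then inner i else 0) (seq 0 N) p).
    { intros i _. destruct (sel i) eqn:Ei; [apply Hin; auto|lra]. }
    { apply in_seq; lia. }
    simpl. rewrite Hselp. unfold inner.
    eapply Rle_trans.
    apply (sumL_nonpos_le (fun k => if sel k then 0 else Gt alpha s x p k tau) (seq 0 N) q).
    { intros k Hk. apply in_seq in Hk. destruct (sel k) eqn:Ek; [lra|].
      pose proof (Hterm tau p k ltac:(lra) Hselp ltac:(lia) Ek).
      pose proof (h_nn _ _ _ _ H p k tau Hp ltac:(lia) ltac:(lra)). nra. }
    { apply in_seq; lia. }
    simpl. rewrite Hselq. apply Hterm; auto. lra. }
  specialize (Hsum Hpt Hg).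
  rewrite HgI in Hsum.
  assert (C0 <= sumL (fun i => if sel i then x i t1 - x i T else 0) (seq 0 N)).
  { unfold C0. apply sumL_le. intros i _. destruct (sel i) eqn:Ei; [|lra].
    destruct (Hsel_t i Ei) as [_ Hh]. pose proof (Hh t1 Ht1). lra. }
  assert (-d * RInt (alpha p q) T t1 <= -d * (- C0 / d + 1)) by (apply Rmult_le_compat_neg_l; lra).
  replace (-d * (- C0 / d + 1)) with (C0 - d) in H1 by (field; lra).
  lra.
Qed.

Lemma sol_of N alpha s x t0 : is_solution N alpha s x t0 -> Sol N alpha s x t0.
Proof.
  intros H i Hi t1 t2 H1 H2.
  destruct (H i Hi t2 ltac:(lra)) as [pr2 E2].
  destruct (H i Hi t1 ltac:(lra)) as [pr1 E1].
  rewrite <- RInt_Reals in E1, E2.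
  apply ex_RInt_Reals_1 in pr2.
  assert (Ha : ex_RInt (rhs N alpha s x i) t0 t1) by (apply (ex_RInt_Chasles_1 (V:=R_CompleteNormedModule) _ t0 t1 t2); auto; lra).
  assert (Hb : ex_RInt (rhs N alpha s x i) t1 t2) by (apply (ex_RInt_Chasles_2 (V:=R_CompleteNormedModule) _ t0 t1 t2); auto; lra).
  split; auto.
  pose proof (RInt_Chasles (rhs N alpha s x i) t0 t1 t2 Ha Hb). unfold plus in H0; simpl in H0.
  lra.
Qed.

Theorem lemma7 (N : nat) (s : nat -> R) (alpha : nat -> nat -> R -> R)
  (amin amax : R) (t0 : R) (x : nat -> R -> R) :
  (forall i, (S i < N)%nat -> s (S i) < s i) ->
  (forall i, (i < N)%nat -> 0 < s i) ->
  (forall i j t, (i < N)%nat -> (j < N)%nat -> 0 <= t -> alpha i j t = alpha j i t) ->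
  (forall i j t, (i < N)%nat -> (j < N)%nat -> 0 <= t -> 0 <= alpha i j t) ->
  (forall i j, (i < N)%nat -> (j < N)%nat -> null_set (fun t => 0 <= t /\ ~ continuity_pt (alpha i j) t)) ->
  integrally_connected N alpha ->
  0 < amin -> amin <= amax ->
  (forall i j t, (i < N)%nat -> (j < N)%nat -> 0 <= t ->
     alpha i j t = 0 \/ (amin <= alpha i j t /\ alpha i j t <= amax)) ->
  0 <= t0 ->
  is_solution N alpha s x t0 ->
  (exists T, t0 <= T /\
     forall i, (S i < N)%nat -> forall t, T <= t ->
       - s i < x i t < s i) /\
  (forall i, (S i < N)%nat -> forall eps, 0 < eps ->
     exists T, forall t, T <= t -> Rabs (x i t) <= s (N - 1)%nat + eps).
Proof.
  intros Hdec Hpos Hsym Hnn _ Hconn Hamin Hamm Hab Ht0 Hsol.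
  destruct (Nat.lt_ge_cases N 2) as [HN|HN].
  { split. exists t0. split. lra. intros i Hi. lia. intros i Hi. lia. }
  assert (Hd : forall i j, (i <= j)%nat -> (j < N)%nat -> s j <= s i).
  { intros i j Hij Hj. induction Hij. lra.
    pose proof (Hdec m Hj). assert (s m <= s i) by (apply IHHij; lia). lra. }
  assert (H : Hyp N s alpha amax).
  { constructor; auto.
    - intros i j t Hi Hj Ht. destruct (Hab i j t Hi Hj Ht) as [->|[]]; lra.
    - lra. }
  assert (HS := sol_of N alpha s x t0 Hsol).
  assert (HSo := sol_opp N s alpha amax x t0 H HS).
  assert (Hgap : s (N - 1)%nat < s (N - 2)%nat).
  { replace (N - 1)%nat with (S (N - 2)) by lia. apply Hdec. lia. }
  assert (Hge : forall i, (i < N - 1)%nat -> s (N - 2)%nat <= s i) by (intros; apply Hd; lia).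
  assert (Key : forall b, s (N - 1)%nat < b -> b < s (N - 2)%nat ->
            exists T, t0 <= T /\ forall i t, (i < N - 1)%nat -> T <= t -> Rabs (x i t) <= b).
  { intros b Hb1 Hb2.
    assert (Hb3 : forall i, (i < N - 1)%nat -> b < s i) by (intros i Hi; pose proof (Hge i Hi); lra).
    destruct (upper N s alpha amax x t0 b H HS Ht0 HN Hconn Hb1 Hb3) as [T1 [HT1 H1]].
    destruct (upper N s alpha amax (fun j t => - x j t) t0 b H HSo Ht0 HN Hconn Hb1 Hb3) as [T2 [HT2 H2]].
    exists (Rmax T1 T2). split. eapply Rle_trans; [apply HT1|apply Rmax_l].
    intros i t Hi Ht. pose proof (Rmax_l T1 T2). pose proof (Rmax_r T1 T2).
    specialize (H1 i t Hi ltac:(lra)). specialize (H2 i t Hi ltac:(lra)). simpl in H2.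
    apply Rabs_le. lra. }
  split.
  - destruct (Key ((s (N - 1)%nat + s (N - 2)%nat) / 2) ltac:(lra) ltac:(lra)) as [T [HT HK]].
    exists T. split; auto. intros i Hi t Ht.
    specialize (HK i t ltac:(lia) Ht). apply Rabs_le_between in HK.
    pose proof (Hge i ltac:(lia)). lra.
  - intros i Hi eps He.
    set (g := Rmin eps ((s (N - 2)%nat - s (N - 1)%nat) / 2)).
    assert (0 < g) by (unfold g; apply Rmin_glb_lt; lra).
    assert (g <= eps) by apply Rmin_l.
    assert (g <= (s (N - 2)%nat - s (N - 1)%nat) / 2) by apply Rmin_r.
    destruct (Key (s (N - 1)%nat + g) ltac:(lra) ltac:(lra)) as [T [HT HK]].
    exists T. intros t Ht. specialize (HK i t ltac:(lia) Ht). lra.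
Qed.
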